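(* Let $M$ be a finite abelian group of order $m$, $J$ a Jacobi function on $M$, and $i\colon\hat{M}\to\hat{M}$ a bijection with $i(x)=x\,i(x^{-1})$ for all $x$, such that $J(\alpha,\beta)=\frac{1}{m}\sum_{x\in\hat{M}}\alpha(i(x))\beta(i(x)x^{-1})$ for all $\alpha,\beta\in M$. Define $x\oplus y=x\,i(x/y)^{-1}$ for $x,y\in\hat{M}$. Then for all $\alpha,\beta,\gamma\in M$, \[ \sum_{\substack{(x\oplus y)\oplus z=1,\\ x,y,z\in\hat{M}}}\alpha(x)\beta(y)\gamma(z)=\sum_{\substack{x\oplus(y\oplus z)=1,\\ x,y,z\in\hat{M}}}\alpha(x)\beta(y)\gamma(z). \]
   Context: $\hat{M}$ is the Pontryagin dual of $M$, written multiplicatively with identity $1$; for $\alpha\in M$, $x\in\hat{M}$, $\alpha(x)$ is the value of the character $x$ at $\alpha$. $\delta(\alpha)=1$ if $\alpha$ is the identity of $M$ and $0$ otherwise. A Jacobi function on $M$ is a function $J\colon M\times M\to\mathbf{C}$ satisfying: (A) $J(\alpha,\beta)=J(\beta,\alpha)$; (B) with $J^*(\alpha,\beta)=-\delta(\alpha)-\delta(\beta)+J(\alpha,\beta)$, $J^*(\alpha,\beta)J^*(\alpha\beta,\gamma)=J^*(\alpha,\beta\gamma)J^*(\beta,\gamma)$; (C) $\sum_{\beta\in M}J(\alpha_1\beta,\alpha_2\beta^{-1})J(\alpha_3\beta,\alpha_4\beta^{-1})=J(\alpha_1\alpha_4,\alpha_2\alpha_3)$; all for all elements of $M$. *)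

(* Defs.v *)
From HB Require Import structures.
From mathcomp Require Import all_boot all_order all_algebra all_fingroup all_field.
Set Implicit Arguments. Unset Strict Implicit. Unset Printing Implicit Defensive.
Import GRing.Theory Num.Theory.
Local Open Scope ring_scope.

Definition delta (gT : finGroupType) (a : gT) : algC := (a == 1%g)%:R.

Definition Jstar (gT : finGroupType) (J : gT -> gT -> algC) (a b : gT) : algC :=
  - delta a - delta b + J a b.

(* Jacobi function on M (axioms (A), (B), (C)) *)
Definition jacobi_function (gT : finGroupType) (J : gT -> gT -> algC) : Prop :=
  [/\ forall a b : gT, J a b = J b a,
      forall a b c : gT,
        Jstar J a b * Jstar J (a * b)%g c = Jstar J a (b * c)%g * Jstar J b c &
      forall a1 a2 a3 a4 : gT,
        \sum_(b : gT) J (a1 * b)%g (a2 * b^-1)%g * J (a3 * b)%g (a4 * b^-1)%g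
        = J (a1 * a4)%g (a2 * a3)%g].

(* dT is (identified with) the Pontryagin dual of gT via the pairing
   e a x = "a(x)" = value of the character x at a:
   each e(., x) is a homomorphism gT -> C^*, e is multiplicative in x,
   and x |-> e(., x) is a bijection onto Hom(gT, C^* ). *)
Definition dual_pairing (gT dT : finGroupType) (e : gT -> dT -> algC) : Prop :=
  [/\ forall a x, e a x != 0,
      forall a b x, e (a * b)%g x = e a x * e b x,
      forall a x y, e a (x * y)%g = e a x * e a y,
      forall x y, (forall a, e a x = e a y) -> x = y &
      forall chi : gT -> algC, (forall a, chi a != 0) ->
        (forall a b, chi (a * b)%g = chi a * chi b) ->
        exists x, forall a, chi a = e a x].

Definition oplus (dT : finGroupType) (i : dT -> dT) (x y : dT) : dT :=
  (x * (i (x * y^-1))^-1)%g.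

(* Main.v *)
Require Import Defs.
From HB Require Import structures.
From mathcomp Require Import all_boot all_order all_algebra all_fingroup all_field all_character.
From mathcomp Require Import ring.
Import GRing.Theory Num.Theory.
Local Open Scope ring_scope.

Section S.
Variables (gT dT : finGroupType) (e : gT -> dT -> algC).
Hypothesis ab : abelian [set: gT].
Hypothesis dp : dual_pairing e.

Lemma sep a : a != 1%g -> exists x, e a x != 1.
Proof.
move=> a1.
have : a \notin \bigcap_(i : Iirr [set: gT]%G) cfker 'chi[[set: gT]%G]_i.
  by rewrite TI_cfker_irr inE.
move=> H.
have [i] : exists i, a \notin cfker 'chi[[set: gT]%G]_i.
  apply/existsP; apply: contraR H => /existsPn H'; apply/bigcapP => i _.
  by move: (H' i); rewrite negbK.
rewrite cfkerEchar ?irr_char // inE /= in_setT /=.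
have lin := char_abelianP _ ab i.
rewrite lin_char1 // => chia.
case: dp => nz _ _ _ sur.
case: (sur (fun g => 'chi_i g)) => [g|g h|x Hx].
- exact: lin_char_neq0.
- by rewrite lin_charM ?in_setT.
by exists x; rewrite -Hx.
Qed.

Lemma e1 x : e 1%g x = 1.
Proof.
case: dp => nz eM _ _ _.
have := eM 1%g 1%g x; rewrite mulg1 => h.
by apply: (mulfI (nz 1%g x)); rewrite mulr1 -h.
Qed.

Lemma eV a x : e (a^-1)%g x = (e a x)^-1.
Proof.
case: dp => nz eM _ _ _.
apply: (mulfI (nz a x)); rewrite -eM mulgV e1 divff //.
Qed.

Lemma e1' a : e a 1%g = 1.
Proof.
case: dp => nz _ eM _ _.
have := eM a 1%g 1%g; rewrite mulg1 => h.
by apply: (mulfI (nz a 1%g)); rewrite mulr1 -h.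
Qed.

Lemma eV' a x : e a (x^-1)%g = (e a x)^-1.
Proof.
case: dp => nz _ eM _ _.
apply: (mulfI (nz a x)); rewrite -eM mulgV e1' divff //.
Qed.

Lemma dcomm (x y : dT) : (x * y = y * x)%g.
Proof.
case: dp => _ _ eM inj _; apply: inj => a; rewrite !eM mulrC //.
Qed.

Lemma sumx a : \sum_x e a x = #|dT|%:R * (a == 1%g)%:R.
Proof.
case: (eqVneq a 1%g) => [->|a1].
  by rewrite (eq_bigr (fun _ => 1)) => [|x _]; rewrite ?e1 // sumr_const mulr1.
case: (@sep a a1) => y ey; rewrite mulr0.
case: dp => nz _ eM _ _.
have : \sum_x e a x = e a y * \sum_x e a x.
  rewrite mulr_sumr (reindex_inj (mulgI y)) /=.
  by apply: eq_bigr => x _; rewrite eM.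
move/eqP; rewrite -subr_eq0 -{1}[\sum_x _]mul1r -mulrBl mulf_eq0 subr_eq0 eq_sym (negbTE ey) /=.
by move/eqP.
Qed.

Lemma suma x : \sum_a e a x = #|gT|%:R * (x == 1%g)%:R.
Proof.
case: (eqVneq x 1%g) => [->|x1].
  by rewrite (eq_bigr (fun _ => 1)) => [|a _]; rewrite ?e1' // sumr_const mulr1.
have [a ea] : exists a, e a x != 1.
  apply/existsP; apply: contraR x1 => /existsPn H.
  case: dp => _ _ _ inj _; apply/eqP; apply: inj => a.
  by rewrite e1'; apply/eqP; move: (H a); rewrite negbK.
rewrite mulr0.
case: dp => nz eM _ _ _.
have : \sum_b e b x = e a x * \sum_b e b x.
  rewrite mulr_sumr (reindex_inj (mulgI a)) /=.
  by apply: eq_bigr => b _; rewrite eM.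
move/eqP; rewrite -subr_eq0 -{1}[\sum_b _]mul1r -mulrBl mulf_eq0 subr_eq0 eq_sym (negbTE ea) /=.
by move/eqP.
Qed.

Lemma card_eq : #|dT| = #|gT|.
Proof.
have h1 : \sum_(a : gT) \sum_(x : dT) e a x = #|dT|%:R.
  rewrite (eq_bigr (fun a => #|dT|%:R * (a == 1%g)%:R)) => [|a _]; last exact: sumx.
  by rewrite -mulr_sumr (bigD1 1%g) //= eqxx big1 ?addr0 ?mulr1 // => a /negbTE ->.
have h2 : \sum_(x : dT) \sum_(a : gT) e a x = #|gT|%:R.
  rewrite (eq_bigr (fun x => #|gT|%:R * (x == 1%g)%:R)) => [|x _]; last exact: suma.
  by rewrite -mulr_sumr (bigD1 1%g) //= eqxx big1 ?addr0 ?mulr1 // => a /negbTE ->.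
by apply/eqP; rewrite -(eqr_nat algC) -h1 -h2 exchange_big.
Qed.
End S.
Section T.
Variables (gT dT : finGroupType) (e : gT -> dT -> algC) (J : gT -> gT -> algC) (i k : dT -> dT).
Hypothesis ab : abelian [set: gT].
Hypothesis dp : dual_pairing e.
Hypothesis Hik : cancel i k.
Hypothesis Hki : cancel k i.
Hypothesis Hix : forall x : dT, i x = (x * i x^-1)%g.
Hypothesis HJ : forall a b : gT,
     J a b = (#|gT|%:R)^-1 * \sum_(x : dT) e a (i x) * e b (i x * x^-1)%g.

Let nz : forall a x, e a x != 0. Proof. by case: dp. Qed.
Let eMl : forall a b x, e (a * b)%g x = e a x * e b x. Proof. by case: dp. Qed.
Let eMr : forall a x y, e a (x * y)%g = e a x * e a y. Proof. by case: dp. Qed.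
Let inj : forall x y, (forall a, e a x = e a y) -> x = y. Proof. by case: dp. Qed.
Let eVr a x : e a (x^-1)%g = (e a x)^-1. Proof. exact: eV'. Qed.

Lemma m_nz : (#|gT|%:R : algC) != 0.
Proof. rewrite pnatr_eq0 -lt0n; apply/card_gt0P; by exists 1%g. Qed.

Lemma K1 (f : dT -> algC) u :
  \sum_(z | oplus i u z == 1%g) f z = f ((k u)^-1 * u)%g.
Proof.
rewrite (big_pred1 ((k u)^-1 * u)%g) // => z /=.
rewrite /oplus; apply/eqP/eqP => [H|->].
  have E : u = i (u * z^-1)%g by apply/eqP; rewrite eq_mulgV1 H.
  have E2 : k u = (u * z^-1)%g by rewrite {1}E Hik.
  apply: inj => a; rewrite E2 !(eMr, eVr); field.
  by rewrite !(nz, mulf_neq0, invr_eq0).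
have E : (u * ((k u)^-1 * u)^-1)%g = k u.
  apply: inj => a; rewrite !(eMr, eVr); field.
  by rewrite !(nz, mulf_neq0, invr_eq0).
by rewrite E Hki mulgV.
Qed.

Lemma ocomm x y : oplus i x y = oplus i y x.
Proof.
rewrite /oplus Hix !invMg invgK; apply: inj => a; rewrite !(eMr, eVr, invgK); field.
by rewrite !(nz, mulf_neq0, invr_eq0).
Qed.

Lemma Lsum a b c :
  \sum_x \sum_y e a x * e b y * e c ((k (oplus i x y))^-1 * oplus i x y)%g
  = #|gT|%:R * J a b * (#|gT|%:R * J (a * b)%g c).
Proof.
set h := fun x y => e a x * e b y * e c ((k (oplus i x y))^-1 * oplus i x y)%g.
have inj1 x : injective (fun s : dT => (s^-1 * x)%g).
  by move=> s t /= /mulIg /invg_inj.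
transitivity (\sum_x \sum_s h x (s^-1 * x)%g).
  by apply: eq_bigr => x _; rewrite (reindex_inj (inj1 x)).
rewrite exchange_big /=.
transitivity (\sum_s \sum_u h (u * i s)%g (s^-1 * (u * i s))%g).
  by apply: eq_bigr => s _; rewrite (reindex_inj (mulIg (i s))).
have Eo s u : oplus i (u * i s)%g (s^-1 * (u * i s))%g = u.
  rewrite /oplus.
  have -> : (u * i s * (s^-1 * (u * i s))^-1)%g = s.
    apply: inj => a'; rewrite !(eMr, eVr, invgK); field.
    by rewrite !(nz, mulf_neq0, invr_eq0).
  by rewrite mulgK.
transitivity (\sum_s \sum_u (e a (i s) * e b (i s * s^-1)%g) *
   (e (a * b)%g u * e c ((k u)^-1 * u)%g)).
  apply: eq_bigr => s _; apply: eq_bigr => u _; rewrite /h Eo.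
  rewrite !(eMr, eMl, eVr); field.
  by rewrite !(nz, mulf_neq0, invr_eq0).
rewrite -big_distrlr /=.
congr (_ * _).
  by rewrite HJ mulrA divff ?mul1r // m_nz.
rewrite HJ mulrA divff ?mul1r ?m_nz //.
rewrite (reindex_inj (can_inj Hik)) /=; apply: eq_bigr => t _.
by rewrite Hik (@dcomm _ _ _ dp).
Qed.


Lemma Jinv a : J a a^-1 = (a == 1%g)%:R.
Proof.
rewrite HJ (eq_bigr (fun x => e a x)) => [|x _]; last first.
  rewrite !(eMr, eVr, @eV _ _ _ dp); field.
  by rewrite !(nz, mulf_neq0, invr_eq0).
by rewrite (@sumx _ _ _ ab dp) (@card_eq _ _ _ ab dp) mulrA mulVf ?m_nz ?mul1r.
Qed.

Hypothesis JJ : jacobi_function J.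

Lemma GFS a b c : Jstar J a b * Jstar J (a * b)%g c =
  J a b * J (a * b)%g c +
  (- ((c == 1%g)%:R * J a b + (a == 1%g)%:R * J b c + (b == 1%g)%:R * J a c)
   + ((a == 1%g)%:R * (b == 1%g)%:R + (a == 1%g)%:R * (c == 1%g)%:R
      + (b == 1%g)%:R * (c == 1%g)%:R)).
Proof.
have f1 : ((a * b)%g == 1%g)%:R * J a b = ((a * b)%g == 1%g)%:R * (a == 1%g)%:R :> algC.
  case: (eqVneq (a * b)%g 1%g) => [H|]; last by rewrite !mul0r.
  have -> : b = a^-1%g by apply/eqP; rewrite eq_sym eq_invg_mul H.
  by rewrite Jinv.
have f2 : (a == 1%g)%:R * J (a * b)%g c = (a == 1%g)%:R * J b c :> algC.
  by case: (eqVneq a 1%g) => [->|]; rewrite ?mul1g ?mul0r.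
have f3 : (b == 1%g)%:R * J (a * b)%g c = (b == 1%g)%:R * J a c :> algC.
  by case: (eqVneq b 1%g) => [->|]; rewrite ?mulg1 ?mul0r.
have f4 : (b == 1%g)%:R * ((a * b)%g == 1%g)%:R = (a == 1%g)%:R * (b == 1%g)%:R :> algC.
  by case: (eqVneq b 1%g) => [->|]; rewrite ?mulg1 ?mul0r ?mulr1 ?mul1r ?mulr0.
rewrite /Jstar /delta.
set da := (a == 1%g)%:R; set db := (b == 1%g)%:R; set dc := (c == 1%g)%:R.
set dab := ((a * b)%g == 1%g)%:R.
have E : (- da - db + J a b) * (- dab - dc + J (a * b)%g c) =
  J a b * J (a * b)%g c - dab * J a b - dc * J a b - da * J (a * b)%g c
  - db * J (a * b)%g c + dab * da + da * dc + db * dab + db * dc by ring.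
rewrite E f1 f2 f3 f4; ring.
Qed.

Lemma Fcyc a b c : J a b * J (a * b)%g c = J b c * J (b * c)%g a.
Proof.
case: JJ => JA JB _.
have Hs : Jstar J a (b * c)%g = Jstar J (b * c)%g a by rewrite /Jstar JA; ring.
have H0 := JB a b c; rewrite Hs in H0.
have H : Jstar J a b * Jstar J (a * b)%g c = Jstar J b c * Jstar J (b * c)%g a.
  by rewrite H0 mulrC.
rewrite GFS GFS (JA c a) (JA b a) in H.
set S1 := (X in _ + X = _) in H; set S2 := (X in _ = _ + X) in H.
have E : S2 = S1 by rewrite /S1 /S2; ring.
rewrite E in H.
by move/addIr: H.
Qed.
Lemma main_sec a b c :
    \sum_(x : dT) \sum_(y : dT) \sum_(z : dT | oplus i (oplus i x y) z == 1%g)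
       e a x * e b y * e c z
    = \sum_(x : dT) \sum_(y : dT) \sum_(z : dT | oplus i x (oplus i y z) == 1%g)
       e a x * e b y * e c z.
Proof.
rewrite (eq_bigr (fun x => \sum_y e a x * e b y * e c ((k (oplus i x y))^-1 * oplus i x y)%g));
  last by move=> x _; apply: eq_bigr => y _; rewrite (K1 (fun z => e a x * e b y * e c z)).
rewrite Lsum.
rewrite (eq_bigr (fun x => \sum_y \sum_z (if oplus i x (oplus i y z) == 1%g then e a x * e b y * e c z else 0)));
  last by move=> x _; apply: eq_bigr => y _; rewrite big_mkcond.
rewrite exchange_big /=.
rewrite (eq_bigr (fun y => \sum_z e b y * e c z * e a ((k (oplus i y z))^-1 * oplus i y z)%g)).
  rewrite Lsum; transitivity (#|gT|%:R * #|gT|%:R * (J a b * J (a * b)%g c)); first by ring.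
  by rewrite Fcyc; ring.
move=> y _; rewrite exchange_big /=; apply: eq_bigr => z _.
rewrite -big_mkcond /=.
rewrite (eq_bigl (fun x => oplus i (oplus i y z) x == 1%g)) => [|x]; last by rewrite ocomm.
by rewrite (K1 (fun x => e a x * e b y * e c z)) /=; ring.
Qed.

End T.

Theorem mainTheorem16 (gT dT : finGroupType) (e : gT -> dT -> algC)
  (J : gT -> gT -> algC) (i : dT -> dT) :
  abelian [set: gT] ->
  dual_pairing e ->
  jacobi_function J ->
  bijective i ->
  (forall x : dT, i x = (x * i x^-1)%g) ->
  (forall a b : gT,
     J a b = (#|gT|%:R)^-1 * \sum_(x : dT) e a (i x) * e b (i x * x^-1)%g) ->
  forall a b c : gT,
    \sum_(x : dT) \sum_(y : dT) \sum_(z : dT | oplus i (oplus i x y) z == 1%g)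
       e a x * e b y * e c z
    = \sum_(x : dT) \sum_(y : dT) \sum_(z : dT | oplus i x (oplus i y z) == 1%g)
       e a x * e b y * e c z.
Proof.
move=> ab dp JJ [k Hik Hki] Hix HJ a b c.
exact: (@main_sec gT dT e J i k ab dp Hik Hki Hix HJ JJ a b c).
Qed.
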